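(* Let $\Omega$ be a Polish space possessing a non-Borel subset $E\subset\Omega$ (e.g. $\Omega=\mathbb{R}$), and let $\mu$ be a Borel probability measure on $\Omega$. For $x\in E$ let $T_x:=\mathbb{1}_{\{x\}}\otimes\mu$, i.e. $T_x\nu=\nu(\{x\})\mu$. Then each $T_x$ is weakly continuous, the family $\{T_x:x\in E\}$ is bounded above by the weakly continuous operator $\mathbb{1}\otimes\mu$, but its supremum $\sup_{x\in E}T_x$ in $\mathscr{L}(\mathscr{M}(\Omega))$ is not weakly continuous. In particular $\mathscr{L}(\mathscr{M}(\Omega),\sigma)$ is not order complete in this sense.
   Context: $\mathscr{M}(\Omega)$ is the Banach lattice of finite signed Borel measures; $\mathscr{L}(\mathscr{M}(\Omega))$, the bounded operators on it ordered by positivity, is an order complete vector lattice. $T$ is weakly continuous if $(T\nu)(A)=\int k(x,A)\,d\nu(x)$ for a bounded transition kernel $k$ (map $\Omega\times\mathscr{B}(\Omega)\to\mathbb{R}$, signed measure in the second variable, Borel measurable in the first, $\sup_x\lvert k\rvert(x,\Omega)<\infty$); equivalently, the norm adjoint $T^*$ maps bounded Borel functions to bounded Borel functions. $\mathscr{L}(\mathscr{M}(\Omega),\sigma)$ is the space of weakly continuous operators; $(f\otimes\mu)\nu:=\left(\int f\,d\nu\right)\mu$. *)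

(* Defs.v *)
From HB Require Import structures.
From mathcomp Require Import all_boot all_order all_algebra.
From mathcomp Require Import all_classical all_reals all_analysis.
Set Implicit Arguments. Unset Strict Implicit. Unset Printing Implicit Defensive.
Import Order.TTheory GRing.Theory Num.Theory.
Import numFieldNormedType.Exports.
Local Open Scope classical_set_scope.
Local Open Scope ring_scope.

(** Polish space: here a complete separable metric space (Hausdorff complete
    pseudometric space with a countable dense subset). *)
Definition separable_space (T : topologicalType) : Prop :=
  exists D : set T, countable D /\ dense D.

Notation Borel Omega := (g_sigma_algebraType (@open Omega)).

Section MeasureOps.
Context {R : realType} {d : measure_display} {X : measurableType d}.

Local Open Scope ereal_scope.

(** the elements of M(Omega) are the charges (finite signed measures) *)
Notation meas := (charge X R).

Definition totvar (nu : meas) : \bar R :=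
  ereal_sup [set s | exists (n : nat) (A : nat -> set X),
    [/\ (forall i, measurable (A i)), trivIset setT A &
        s = \sum_(i < n) `|nu (A i)| ] ].

Definition pos_meas (nu : meas) : Prop := forall A, measurable A -> 0 <= nu A.

Definition cintegral (nu : meas) (P N : set X)
    (h : hahn_decomposition nu P N) (f : X -> \bar R) : \bar R :=
  \int[jordan_pos h]_x f x - \int[jordan_neg h]_x f x.

Definition operator := meas -> meas.

Definition op_linear (T : operator) : Prop :=
  forall (a : R) (nu eta : meas) (A : set X), measurable A ->
    T (cadd (cscale a nu) eta) A = a%:E * T nu A + T eta A.

Definition op_bounded (T : operator) : Prop :=
  exists C : R, forall nu : meas, totvar (T nu) <= C%:E * totvar nu.

Definition bounded_op (T : operator) : Prop := op_linear T /\ op_bounded T.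

Definition op_le (S U : operator) : Prop :=
  forall nu : meas, pos_meas nu ->
    forall A, measurable A -> S nu A <= U nu A.

Definition bounded_kernel (k : X -> meas) : Prop :=
  (forall A, measurable A -> measurable_fun setT (fun x => fine (k x A) : R)) /\
  exists C : R, forall x, totvar (k x) <= C%:E.

Definition weakly_continuous (T : operator) : Prop :=
  bounded_op T /\
  exists k : X -> meas, bounded_kernel k /\
    forall (nu : meas) (A : set X), measurable A ->
      forall (P N : set X) (h : hahn_decomposition nu P N),
        T nu A = cintegral h (fun x => k x A).

Definition op_sup {I : Type} (D : set I) (F : I -> operator) (S : operator) : Prop :=
  [/\ bounded_op S,
      (forall i, D i -> op_le (F i) S) &
      (forall U, bounded_op U -> (forall i, D i -> op_le (F i) U) -> op_le S U)].

(** (f ⊗ mu) nu = (∫ f dnu) mu, for f the indicator of B *)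
Definition ind_tensor (B : set X) (mu : meas) : operator :=
  fun nu => cscale (fine (nu B)) mu.

End MeasureOps.

(* Main.v *)
Require Import Defs.
From HB Require Import structures.
From mathcomp Require Import all_boot all_order all_algebra.
From mathcomp Require Import all_classical all_reals all_analysis.
From mathcomp Require Import ring lra measurable_realfun.
Import Order.TTheory GRing.Theory Num.Theory.
Import numFieldNormedType.Exports.
Local Open Scope classical_set_scope.
Local Open Scope ring_scope.

Section S.
Context {R : realType} {Omega : completePseudoMetricType R}
  (HOmega : hausdorff_space Omega).
Local Notation X := (Borel Omega).
Local Notation meas := (charge X R).
Local Open Scope ereal_scope.

Lemma mset1 (x : Omega) : measurable ([set x] : set X).
Proof.
rewrite -[[set x]]setCK; apply: measurableC.
apply: sub_gen_smallest; apply: closed_openC.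
exact: accessible_closed_set1 (hausdorff_accessible HOmega) x.
Qed.

Lemma charge_fin (nu : meas) A : measurable A -> nu A \is a fin_num.
Proof. exact: fin_num_measure. Qed.

Lemma le_totvar (nu : meas) A : measurable A -> `|nu A| <= totvar nu.
Proof.
move=> mA; apply: ereal_sup_ubound => /=.
exists 1%N, (fun i => if i == 0%N then A else set0); split.
- by move=> i; case: ifP.
- apply/trivIsetP => i j _ _ ij.
  case: ifPn => [/eqP ?|_]; case: ifPn => [/eqP ?|_]; subst;
    by [rewrite ?setI0 ?set0I | rewrite eqxx in ij].
- by rewrite big_ord1.
Qed.



Lemma totvar_ge0 (nu : meas) : 0 <= totvar nu.
Proof.
apply: ereal_sup_ubound => /=; exists 0%N, (fun=> set0); split => //.
- by move=> i j _ _; rewrite setI0 => -[].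
- by rewrite big_ord0.
Qed.

Lemma abs_le_jordan (nu : meas) P N (h : hahn_decomposition nu P N) A :
  measurable A -> `|nu A| <= jordan_pos h A + jordan_neg h A.
Proof.
move=> mA; rewrite (jordan_decomp h mA) /cadd /=; rewrite /cscale EFinN mulN1e.
apply: (le_trans (lee_abs_add _ _)); rewrite abseN !gee0_abs //.
Qed.

Lemma totvar_fin (nu : meas) : totvar nu < +oo.
Proof.
have [P [N h]] := Hahn_decomposition nu.
apply: (@le_lt_trans _ _ (jordan_pos h setT + jordan_neg h setT)); last first.
  by rewrite ltey_eq fin_numD !fin_num_measure.
apply: ge_ereal_sup => _ [n [A [mA tA ->]]].
apply: (@le_trans _ _ (\sum_(i < n) (jordan_pos h (A i) + jordan_neg h (A i)))).
  by apply: lee_sum => i _; exact: abs_le_jordan.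
rewrite big_split /= -!(measure_bigsetU _ mA tA).
by apply: leeD; apply: le_measure; rewrite ?inE //; exact: bigsetU_measurable.
Qed.


Lemma sum_le_totvar (nu : meas) (s : seq Omega) :
  uniq s -> \sum_(x <- s) `|nu [set x]| <= totvar nu.
Proof.
case: s => [|x0 s'] us; first by rewrite big_nil totvar_ge0.
apply: ereal_sup_ubound => /=.
exists (size (x0 :: s')),
  (fun i => if (i < size (x0 :: s'))%N then [set nth x0 (x0 :: s') i] else set0).
split.
- move=> i; case: ifP => _; [exact: mset1 | exact: measurable0].
- move=> i j _ _ [y []]; case: ifP => [il /= ->|_ //]; case: ifP => [jl /= /eqP|_ //].
  by rewrite nth_uniq // => /eqP.
- rewrite (big_nth x0) big_mkord; apply: eq_bigr => i _; rewrite ltn_ord //.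
Qed.


Lemma esumZ (S : set Omega) (a : Omega -> \bar R) (r : R) : (0 <= r)%R ->
  (forall x, 0 <= a x) -> \esum_(x in S) (r%:E * a x) = r%:E * \esum_(x in S) a x.
Proof.
move=> r0 a0; rewrite /esum -ereal_supZl //; last first.
  by apply/set0P; exists 0, set0 => //; [exact: fsets_set0|rewrite fsbig_set0].
congr ereal_sup; apply/seteqP; split => t.
- by move=> [F hF <-]; exists (\sum_(x \in F) a x); [exists F|rewrite ge0_mule_fsumr].
- by move=> [_ [F hF <-] <-]; exists F => //; rewrite ge0_mule_fsumr.
Qed.

Context {E : set Omega}.

Definition ppos (x : R) : R := ((x + `|x|) / 2)%R.
Definition posp (f : Omega -> R) := \esum_(x in E) (ppos (f x))%:E.
Definition negp (f : Omega -> R) := \esum_(x in E) (ppos (- f x))%:E.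
Definition sp (f : Omega -> R) : R := (fine (posp f) - fine (negp f))%R.
Definition bd (f : Omega -> R) := \esum_(x in E) `|f x|%:E < +oo.

Lemma ppos_ge0 x : (0 <= ppos x)%R.
Proof.
rewrite /ppos divr_ge0 //; case: (leP 0%R x) => hx.
- by rewrite ger0_norm // addr_ge0.
- by rewrite ltr0_norm // subrr.
Qed.

Lemma maxkey (x : R) : ppos x = (x + ppos (- x))%R.
Proof. by rewrite /ppos normrN; field. Qed.

Lemma absmax (x : R) : (`|x| = ppos x + ppos (- x))%R.
Proof. by rewrite /ppos normrN; field. Qed.

Lemma esum_abs f : \esum_(x in E) `|f x|%:E = posp f + negp f.
Proof.
rewrite /posp /negp -esumD //; last 2 first.
- by move=> x _; rewrite lee_fin ppos_ge0.
- by move=> x _; rewrite lee_fin ppos_ge0.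
by apply: eq_esum => x _; rewrite absmax EFinD.
Qed.

Lemma posp_ge0 f : 0 <= posp f.
Proof. by apply: esum_ge0 => x _; rewrite lee_fin ppos_ge0. Qed.
Lemma negp_ge0 f : 0 <= negp f.
Proof. by apply: esum_ge0 => x _; rewrite lee_fin ppos_ge0. Qed.

Lemma bd_fin f : bd f -> posp f \is a fin_num /\ negp f \is a fin_num.
Proof.
rewrite /bd esum_abs => h.
have p0 := posp_ge0 f; have n0 := negp_ge0 f.
split; rewrite ge0_fin_numE //.
- by apply: le_lt_trans h; rewrite leeDl.
- by apply: le_lt_trans h; rewrite leeDr.
Qed.

Lemma spD f g : bd f -> bd g -> sp (fun x => f x + g x)%R = (sp f + sp g)%R.
Proof.
move=> bf bg.
have [pf nf] := bd_fin _ bf; have [pg ng] := bd_fin _ bg.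
have bfg : bd (fun x => f x + g x)%R.
  apply: (@le_lt_trans _ _ (\esum_(x in E) `|f x|%:E + \esum_(x in E) `|g x|%:E)).
    rewrite -esumD //; apply: le_esum => x _; rewrite -EFinD lee_fin; exact: ler_normD.
  by rewrite lte_add_pinfty.
have [pfg nfg] := bd_fin _ bfg.
have key : posp (fun x => f x + g x)%R + (negp f + negp g) =
           negp (fun x => f x + g x)%R + (posp f + posp g).
  rewrite /posp /negp -!esumD //; try by move=> x _; rewrite lee_fin ppos_ge0.
  - apply: eq_esum => x _; rewrite -!EFinD; congr EFin.
    rewrite (maxkey (f x + g x)) (maxkey (f x)) (maxkey (g x)); ring.
  - by move=> x _; rewrite -EFinD lee_fin addr_ge0 // ppos_ge0.
  - by move=> x _; rewrite -EFinD lee_fin addr_ge0 // ppos_ge0.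
move: key; rewrite -(fineK pf) -(fineK nf) -(fineK pg) -(fineK ng) -(fineK pfg) -(fineK nfg).
rewrite -!EFinD => -[]; rewrite /sp /posp /negp => h.
lra.
Qed.


Lemma spN f : sp (fun x => - f x)%R = (- sp f)%R.
Proof.
rewrite /sp.
have -> : posp (fun x => - f x)%R = negp f by [].
have -> : negp (fun x => - f x)%R = posp f.
  by apply: eq_esum => x _; rewrite opprK.
by rewrite opprB.
Qed.

Lemma bdN f : bd f -> bd (fun x => - f x)%R.
Proof.
rewrite /bd => h; rewrite (@eq_esum _ _ _ _ (fun x => `|f x|%:E)) // => x _.
by rewrite normrN.
Qed.

Lemma bdZ f r : bd f -> bd (fun x => r * f x)%R.
Proof.
rewrite /bd => h.
rewrite (@eq_esum _ _ _ _ (fun x => `|r|%:E * `|f x|%:E)).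
  by rewrite esumZ // ?lte_mul_pinfty // ?lee_fin //; exact: esum_ge0.
by move=> x _; rewrite normrM EFinM.
Qed.

Lemma spZ f r : bd f -> (0 <= r)%R -> sp (fun x => r * f x)%R = (r * sp f)%R.
Proof.
move=> bf r0; have [pf nf] := bd_fin _ bf.
rewrite /sp.
have -> : posp (fun x => r * f x)%R = r%:E * posp f.
  rewrite /posp -esumZ //; last by move=> x; rewrite lee_fin ppos_ge0.
  by apply: eq_esum => x _; rewrite -EFinM /ppos normrM (ger0_norm r0); congr EFin; field.
have -> : negp (fun x => r * f x)%R = r%:E * negp f.
  rewrite /negp -esumZ //; last by move=> x; rewrite lee_fin ppos_ge0.
  apply: eq_esum => x _; rewrite -EFinM /ppos normrN normrM (ger0_norm r0) normrN.
  by congr EFin; field.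
by rewrite !fineM //=; ring.
Qed.

Lemma spS f r : bd f -> sp (fun x => r * f x)%R = (r * sp f)%R.
Proof.
move=> bf; case: (leP 0%R r) => hr; first exact: spZ.
have -> : (fun x => r * f x)%R = (fun x => (- r) * (- f x))%R.
  by apply: funext => x; rewrite mulrNN.
rewrite spZ ?spN; [ring | exact: bdN | rewrite oppr_ge0 ltW //].
Qed.

Definition gg (nu : meas) (x : Omega) : R := fine (nu [set x]).
Definition cc (nu : meas) : R := sp (gg nu).

Lemma esum_gg_le (nu : meas) : \esum_(x in E) `|gg nu x|%:E <= totvar nu.
Proof.
apply: ge_ereal_sup => _ [F [finF FE] <-].
rewrite fsbig_finite //=.
rewrite (eq_bigr (fun x => `|nu [set x]|)); last first.
  by move=> x _; rewrite /gg -abse_EFin fineK //; apply: charge_fin; exact: mset1.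
apply: sum_le_totvar; exact: finmap.fset_uniq.
Qed.

Lemma bd_gg (nu : meas) : bd (gg nu).
Proof. exact: le_lt_trans (esum_gg_le nu) (totvar_fin nu). Qed.

Lemma gg_lin a (nu eta : meas) :
  gg (cadd (cscale a nu) eta) = (fun x => a * gg nu x + gg eta x)%R.
Proof.
apply: funext => x; rewrite /gg /cadd /cscale /=.
have h1 := charge_fin nu _ (mset1 x); have h2 := charge_fin eta _ (mset1 x).
rewrite fineD //; last by rewrite fin_numM.
by rewrite fineM.
Qed.

Lemma cc_lin a (nu eta : meas) :
  cc (cadd (cscale a nu) eta) = (a * cc nu + cc eta)%R.
Proof.
rewrite /cc gg_lin (spD (fun x => a * gg nu x)%R (gg eta)); last exact: bd_gg.
  by rewrite (spS (gg nu) a) //; exact: bd_gg.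
exact/bdZ/bd_gg.
Qed.

Lemma cc_bound (nu : meas) : (`|cc nu|)%:E <= totvar nu.
Proof.
have [pf nf] := bd_fin _ (bd_gg nu).
apply: (@le_trans _ _ (\esum_(x in E) `|gg nu x|%:E)); last exact: esum_gg_le.
rewrite (esum_abs (gg nu)).
rewrite /cc /sp.
move: pf nf (posp_ge0 (gg nu)) (negp_ge0 (gg nu)).
case: (posp (gg nu)) => // p _; case: (negp (gg nu)) => // n _.
rewrite !lee_fin /= => p0 n0.
apply: (le_trans (ler_normB _ _)).
by rewrite !ger0_norm.
Qed.


Context {mu : probability X R}.
Local Notation muc := (charge_of_finite_measure mu).

Lemma mu_fin {A} : measurable A -> mu A \is a fin_num.
Proof. by move=> mA; exact: fin_num_measure. Qed.

Lemma muc_fin {A} : measurable A -> muc A \is a fin_num.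
Proof. by move=> mA; exact: fin_num_measure. Qed.

Lemma totvar_scale (r : R) : totvar (cscale r muc) <= `|r|%:E.
Proof.
apply: ge_ereal_sup => _ [n [A [mA tA ->]]].
rewrite (eq_bigr (fun i : 'I_n => `|r|%:E * mu (A i))); last first.
  by move=> i _; rewrite /cscale /= abseM abse_EFin gee0_abs.
rewrite -ge0_sume_distrr // -(measure_bigsetU _ mA tA).
rewrite -[leRHS]mule1; apply: lee_wpmul2l; first by rewrite lee_fin.
by apply: probability_le1; exact: bigsetU_measurable.
Qed.

Lemma bounded_scale (c : meas -> R) :
  (forall a nu eta, c (cadd (cscale a nu) eta) = (a * c nu + c eta)%R) ->
  (forall nu, (`|c nu|)%:E <= totvar nu) ->
  bounded_op (fun nu => cscale (c nu) muc).
Proof.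
move=> lin bnd; split.
- move=> a nu eta A mA; rewrite /= /cscale /= lin.
  rewrite -(fineK (mu_fin mA)) -!EFinM -EFinD; congr EFin; ring.
- exists 1%R => nu; rewrite mul1e; apply: le_trans (totvar_scale _) (bnd nu).
Qed.

Lemma fine_lin B (mB : measurable B) a (nu eta : meas) :
  fine (cadd (cscale a nu) eta B) = (a * fine (nu B) + fine (eta B))%R.
Proof.
rewrite /cadd /cscale /=.
have h1 := charge_fin nu _ mB; have h2 := charge_fin eta _ mB.
rewrite fineD //; last by rewrite fin_numM.
by rewrite fineM.
Qed.

Lemma fine_bound B (mB : measurable B) (nu : meas) :
  (`|fine (nu B)|)%:E <= totvar nu.
Proof. by rewrite -abse_EFin fineK ?le_totvar // charge_fin. Qed.

Lemma bounded_ind B : measurable B -> bounded_op (ind_tensor B muc).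
Proof.
move=> mB; apply: (bounded_scale (fun nu => fine (nu B))).
- by move=> a nu eta; exact: fine_lin.
- by move=> nu; exact: fine_bound.
Qed.

Lemma bounded_S : bounded_op (fun nu => cscale (cc nu) muc).
Proof. apply: bounded_scale; [exact: cc_lin | exact: cc_bound]. Qed.


Lemma indic_ge0 B (y : X) : (0 <= (\1_B y : R))%R.
Proof. by rewrite indicE; case: (y \in B). Qed.

Lemma indic_le1 B (y : X) : (`|(\1_B y : R)| <= 1)%R.
Proof. by rewrite indicE; case: (y \in B); rewrite ?normr1 ?normr0. Qed.

Lemma wc_ind B : measurable B -> weakly_continuous (ind_tensor B muc).
Proof.
move=> mB; split; first exact: bounded_ind.
exists (fun y => cscale (\1_B y) muc); split.
- split.
  + move=> A mA; rewrite /cscale /=.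
    have -> : (fun x => fine ((\1_B x)%:E * mu A)) = (fun x => \1_B x * fine (mu A))%R.
      by apply: funext => x; rewrite fineM // mu_fin.
    by apply: measurable_realfun.measurable_funM; [exact: measurable_realfun.measurable_indic | exact: measurable_cst].
  + by exists 1%R => y; apply: le_trans (totvar_scale _) _; rewrite lee_fin indic_le1.
- move=> nu A mA P N h; rewrite /cintegral /ind_tensor /= /cscale /=.
  have mi : measurable_fun setT (fun x : X => ((\1_B x : R)%:E : \bar R)).
    by apply/measurable_EFinP; exact: measurable_realfun.measurable_indic.
  rewrite !ge0_integralZr //; try by move=> x _; rewrite lee_fin indic_ge0.
  rewrite !integral_indic // !setIT.
  rewrite fineK ?charge_fin // (jordan_decomp h mB) /cadd /= /cscale.
  have -> : forall z : \bar R, (-1)%:E * z = - z by move=> z; rewrite mulN1e.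
  rewrite muleBl ?mu_fin //.
  by rewrite fin_num_adde_defl // fin_numN fin_num_measure.
Qed.


Lemma mulN1 (z : \bar R) : (-1)%:E * z = - z.
Proof. by rewrite mulN1e. Qed.

Lemma mul1' (z : \bar R) : (1%R)%:E * z = z.
Proof. by rewrite mul1e. Qed.

Lemma pos_le_T (nu : meas) x : pos_meas nu -> nu [set x] <= nu setT.
Proof.
move=> pnu; rewrite (chargeDI nu measurableT (mset1 x)) setTI.
by rewrite leeDr // pnu //; apply: measurableD => //; exact: mset1.
Qed.

Lemma le_Tx_all x : op_le (ind_tensor (X := X) [set x] muc) (ind_tensor (X := X) setT muc).
Proof.
move=> nu pnu A mA; rewrite /ind_tensor /= /cscale /=.
apply: lee_wpmul2r => //; rewrite lee_fin fine_le ?charge_fin ?inE //; last exact: pos_le_T.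
exact: mset1.
Qed.

Lemma gg_pos (nu : meas) y : pos_meas nu -> (0 <= gg nu y)%R.
Proof. by move=> pnu; apply: fine_ge0; apply: pnu; exact: mset1. Qed.

Lemma ppos_id (y : R) : (0 <= y)%R -> ppos y = y.
Proof. by move=> y0; rewrite /ppos ger0_norm //; field. Qed.

Lemma ppos_N (y : R) : (0 <= y)%R -> ppos (- y) = 0%R.
Proof. by move=> y0; rewrite /ppos normrN ger0_norm // addNr mul0r. Qed.

Lemma cc_pos (nu : meas) : pos_meas nu -> cc nu = fine (posp (gg nu)).
Proof.
move=> pnu; rewrite /cc /sp.
have -> : negp (gg nu) = 0.
  by apply: esum1 => y _; rewrite ppos_N // gg_pos.
by rewrite /= subr0.
Qed.

Lemma gx_le_cc (nu : meas) x : pos_meas nu -> E x -> (gg nu x <= cc nu)%R.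
Proof.
move=> pnu Ex; rewrite cc_pos //.
have [pf _] := bd_fin _ (bd_gg nu).
have -> : gg nu x = fine ((gg nu x)%:E) by [].
apply: fine_le => //; rewrite ?inE //.
apply: esum_ge; exists [set x]; first by split; [exact: finite_set1 | by move=> y ->].
by rewrite fsbig_set1 ppos_id // gg_pos.
Qed.

Lemma S_ub x : E x -> op_le (ind_tensor (X := X) [set x] muc) (fun nu => cscale (cc nu) muc).
Proof.
move=> Ex nu pnu A mA; rewrite /ind_tensor /= /cscale /=.
by apply: lee_wpmul2r => //; rewrite lee_fin; exact: gx_le_cc.
Qed.

Lemma U_ext (U : operator) : bounded_op U -> forall nu1 nu2 : meas,
  (forall A, measurable A -> nu1 A = nu2 A) ->
  forall A, measurable A -> U nu1 A = U nu2 A.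
Proof.
move=> [lin [C bnd]] nu1 nu2 e A mA.
have tD : totvar (cadd (cscale (-1) nu2) nu1) = 0.
  apply/eqP; rewrite eq_le totvar_ge0 andbT.
  apply: ge_ereal_sup => _ [n [B [mB _ ->]]].
  rewrite big1 //= => i _; rewrite /cadd /= /cscale mulN1 e //.
  by rewrite addeC subee ?abse0 // charge_fin.
have h0 : U (cadd (cscale (-1) nu2) nu1) A = 0.
  apply/eqP; rewrite -abse_eq0 eq_le abse_ge0 andbT.
  apply: le_trans (le_totvar _ _ mA) _.
  by apply: le_trans (bnd _) _; rewrite tD mule0.
have e0 := lin (-1)%R nu2 nu1 A mA.
move: e0; rewrite h0 mulN1.
have f1 := charge_fin (U nu1) _ mA; have f2 := charge_fin (U nu2) _ mA.
move: f1 f2; case: (U nu1 A) => // r1 _; case: (U nu2 A) => // r2 _.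
rewrite -EFinN -EFinD => -[h]; congr EFin; lra.
Qed.


Lemma set1IC (x y : Omega) : y != x -> ([set y] `&` ~` [set x] : set X) = [set y].
Proof.
move=> yx; apply/seteqP; split => z /=; first by case.
by move=> ->; split => // zx; rewrite zx eqxx in yx.
Qed.

Lemma crestr_pos (nu : meas) D (mD : measurable D) :
  pos_meas nu -> pos_meas (crestr nu mD).
Proof. by move=> pnu B mB; rewrite /crestr; apply: pnu; exact: measurableI. Qed.

Lemma U_sum (U : operator) : bounded_op U ->
  (forall x, E x -> op_le (ind_tensor (X := X) [set x] muc) U) ->
  forall x0, E x0 -> forall s : seq Omega, uniq s -> (forall y, y \in s -> E y) ->
  forall nu : meas, pos_meas nu -> forall A, measurable A ->
  (\sum_(y <- s) gg nu y)%R%:E * mu A <= U nu A.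
Proof.
move=> hb hU x0 Ex0; elim => [|x s IH] us sE nu pnu A mA.
  rewrite big_nil mul0e; apply: le_trans (hU x0 Ex0 nu pnu A mA).
  rewrite /ind_tensor /= /cscale /=; apply: mule_ge0 => //.
  by rewrite lee_fin gg_pos.
move/andP: us => [xs us].
pose nu1 := crestr nu (mset1 x).
pose nu2 := crestr nu (measurableC (mset1 x)).
have e : U nu A = U nu1 A + U nu2 A.
  rewrite (@U_ext U hb nu (cadd (cscale 1 nu1) nu2)) //.
    by case: hb => lin _; rewrite lin // mul1'.
  move=> B mB; rewrite /= /cadd /= /cscale /= mul1' /nu1 /nu2 /crestr.
  apply: charge_partition => //.
  - exact: mset1.
  - exact: measurableC (mset1 x).
  - by rewrite setUCr.
  - by rewrite setICr.
rewrite e big_cons EFinD muleDl ?mu_fin //; apply: leeD.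
- apply: (le_trans _ (hU x (sE x (mem_head _ _)) nu1 (crestr_pos _ _ (mset1 x) pnu) A mA)).
  by rewrite /ind_tensor /= /cscale /= /nu1 /crestr setIid.
- apply: (le_trans _ (IH us (fun y ys => sE y _) nu2 (crestr_pos _ _ (measurableC (mset1 x)) pnu) A mA)).
    rewrite (@eq_big_seq _ _ _ _ _ (gg nu) (gg nu2)) //.
    move=> y ys; rewrite /gg /nu2 /crestr /=; congr (fine (nu _)); apply/esym/set1IC.
    by apply: contraNneq xs => <-.
  by move=> y ys; rewrite in_cons ys orbT.
Qed.

Lemma S_least (U : operator) : bounded_op U ->
  (forall x, E x -> op_le (ind_tensor (X := X) [set x] muc) U) ->
  (exists x0, E x0) -> op_le (fun nu => cscale (cc nu) muc) U.
Proof.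
move=> hb hU [x0 Ex0] nu pnu A mA; rewrite /= /cscale /= cc_pos //.
have [pf _] := bd_fin _ (bd_gg nu).
rewrite fineK // muleC -(fineK (mu_fin mA)) /posp /esum -ereal_supZl; last 2 first.
- by apply/set0P; exists 0, set0 => //; [exact: fsets_set0|rewrite fsbig_set0].
- exact/fine_ge0/measure_ge0.
apply: ge_ereal_sup => _ [_ [F [finF FE] <-] <-].
rewrite fsbig_finite //= sumEFin.
rewrite (eq_bigr (gg nu)); last by move=> y _; rewrite ppos_id // gg_pos.
rewrite muleC fineK ?mu_fin //.
apply: (@U_sum U hb hU x0 Ex0) => //; first exact: finmap.fset_uniq.
by move=> y; rewrite in_fset_set // inE => /FE.
Qed.


Definition dch (y : X) : meas := charge_of_finite_measure (@dirac _ X y R).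

Lemma dch_pos y : pos_meas (dch y).
Proof. by move=> B mB; rewrite /dch /charge_of_finite_measure. Qed.

Lemma hahn_dch y : hahn_decomposition (dch y) setT set0.
Proof.
split.
- by split => // B mB _; exact: dch_pos.
- by split => // B mB; rewrite subset0 => ->; rewrite charge0.
- by rewrite setU0.
- by rewrite setI0.
Qed.

Lemma wc_dirac (S : operator) (k : X -> meas) :
  bounded_kernel k ->
  (forall (nu : meas) (A : set X), measurable A ->
      forall (P N : set X) (h : hahn_decomposition nu P N),
        S nu A = cintegral h (fun x => k x A)) ->
  forall y A, measurable A -> S (dch y) A = k y A.
Proof.
move=> [km _] hS y A mA; rewrite (hS _ A mA _ _ (hahn_dch y)) /cintegral.
have mf : measurable_fun setT (fun x => k x A).
  have -> : (fun x => k x A) = EFin \o (fun x => fine (k x A)).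
    by apply: funext => x /=; rewrite fineK // charge_fin.
  by apply/measurable_EFinP; exact: km.
rewrite (@eq_measure_integral _ _ _ setT (@dirac _ X y R)); last first.
  move=> B mB _; change (crestr0 (dch y) (@measurableT _ X) B = \d_y B).
  by rewrite /crestr0 mem_set // /crestr setIT.
rewrite (@eq_measure_integral _ _ _ setT mzero (jordan_neg (hahn_dch y))); last first.
  move=> B mB _; change ((-1)%:E * crestr0 (dch y) (@measurable0 _ X) B = 0).
  by rewrite /crestr0 mem_set // /crestr setI0 charge0 mule0.
by rewrite integral_measure_zero integral_dirac // diracT mul1e sube0.
Qed.


Lemma dch_T (y : X) : dch y setT = 1.
Proof. by change (@dirac _ X y R setT = 1); exact: diracT. Qed.

Lemma dch_1 (y : X) : dch y [set y] = 1.
Proof. by change (@dirac _ X y R [set y] = 1); rewrite diracE mem_set. Qed.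

Lemma cc_dch_notE y : ~ E y -> cc (dch y) = 0%R.
Proof.
move=> nEy; rewrite cc_pos ?dch_pos //.
rewrite (_ : posp _ = 0) //; apply: esum1 => x Ex.
have -> : gg (dch y) x = 0%R.
  rewrite /gg (_ : dch y [set x] = (@dirac _ X y R [set x])) // diracE.
  have -> : (y \in ([set x] : set X)) = false.
    by apply/negbTE; rewrite notin_setE /= => yx; apply: nEy; rewrite yx.
  by [].
by rewrite /ppos normr0 addr0 mul0r.
Qed.

End S.

Theorem mainTheorem9 (R : realType) (Omega : completePseudoMetricType R)
  (HOmega : hausdorff_space Omega) (sepOmega : separable_space Omega)
  (E : set Omega) (hE : ~ measurable (E : set (Borel Omega)))
  (mu : probability (Borel Omega) R) :
  let muc := charge_of_finite_measure mu in
  let T := fun x : Omega => ind_tensor (X := Borel Omega) [set x] muc in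
  [/\ (forall x, E x -> weakly_continuous (T x)),
      weakly_continuous (ind_tensor (X := Borel Omega) setT muc),
      (forall x, E x -> op_le (T x) (ind_tensor (X := Borel Omega) setT muc)),
      (exists S, op_sup E T S) &
      (forall S, op_sup E T S -> ~ weakly_continuous S)].
Proof.
move=> muc T.
have nE : exists x0, E x0.
  apply: contrapT => nE; apply: hE; rewrite (_ : E = set0); first exact: measurable0.
  by apply/seteqP; split => // y Ey; apply: nE; exists y.
have bT : bounded_op (ind_tensor (X := Borel Omega) setT muc).
  exact: bounded_ind.
split.
- by move=> x Ex; apply: wc_ind; exact: mset1.
- exact: wc_ind.
- by move=> x _; exact: (le_Tx_all HOmega).
- exists (fun nu => cscale (cc (E := E) nu) muc); split.
  + exact: bounded_S.
  + by move=> x Ex; exact: (S_ub HOmega).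
  + by move=> U hU hub; exact: (S_least HOmega).
- move=> S [bS ubS leastS] [_ [k [kb hk]]].
  have key y A : measurable A -> S (dch y) A = k y A.
    exact: (wc_dirac S k kb hk y A).
  have Ey1 y : E y -> fine (k y setT) = 1%R.
    move=> Ey; rewrite -key //.
    have up := leastS _ bT (fun x Ex => le_Tx_all HOmega x) (dch y) (dch_pos y)
      setT measurableT.
    have lo := ubS y Ey (dch y) (dch_pos y) setT measurableT.
    have e : S (dch y) setT = 1%E.
      apply: le_anti; apply/andP; split.
      + move: up; rewrite /ind_tensor /= /cscale /=.
        by rewrite indicE mem_set // probability_setT mule1.
      + move: lo; rewrite /T /ind_tensor /= /cscale /=.
        by rewrite indicE mem_set // probability_setT mule1.
    by rewrite e.
  have nEy y : ~ E y -> fine (k y setT) <> 1%R.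
    move=> nEy; rewrite -key //.
    have up := leastS _ (@bounded_S _ _ HOmega E mu) (fun x Ex => S_ub HOmega x Ex)
      (dch y) (dch_pos y) setT measurableT.
    move: up; rewrite /= /cscale cc_dch_notE // mul0e => up e.
    have f := charge_fin (S (dch y)) _ (@measurableT _ (Borel Omega)).
    by move: up; rewrite -(fineK f) e lee_fin ler10.
  apply: hE.
  have -> : E = setT `&` (fun y => fine (k y setT)) @^-1` [set 1%R].
    apply/seteqP; split => y /=.
    + by move=> Ey; split => //; exact: Ey1.
    + by move=> [_ h]; apply: contrapT => nEy0; exact: nEy y nEy0 h.
  case: kb => km _; apply: (km setT measurableT measurableT).
  exact: measurable_set1.
Qed.
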